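(* Let $f:\mathbb{N}_0^n\to[0,\infty)$ be subadditive and suppose there is a constant $D_0$ with $f(\boldsymbol k)-f(\boldsymbol k+\boldsymbol e_i)\le D_0$ for all $\boldsymbol k\in\mathbb{N}_0^n$, $i=1,\dots,n$. Extend $f$ to $\mathbb{R}_0^n$ by $f(\boldsymbol r)=f(\lceil\boldsymbol r\rceil)$ and let $\hat f(\boldsymbol r)=\lim_{t\to\infty}f(t\boldsymbol r)/t$. Then $\hat f$ is subadditive and convex on $\mathbb{R}_0^n$, and Lipschitz: $|\hat f(\boldsymbol r)-\hat f(\boldsymbol s)|\le D\sum_{i=1}^n|r_i-s_i|$ with $D=\max\{f(\boldsymbol e_1),\dots,f(\boldsymbol e_n),D_0\}$. Moreover, for every sequence $\boldsymbol r_t\in\mathbb{R}_0^n$ converging to a finite $\boldsymbol\lambda$, $\lim_{t\to\infty}f(t\boldsymbol r_t)/t=\hat f(\boldsymbol\lambda)$.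
   Context: $\boldsymbol e_i$ is the $i$-th unit vector. A function $f:\mathbb{N}_0^n\to[0,\infty)$ is subadditive if $f(\boldsymbol k+\boldsymbol m)\le f(\boldsymbol k)+f(\boldsymbol m)$. The limit $\hat f(\boldsymbol r)$ exists and is finite and positively homogeneous for any nonnegative subadditive $f$ (so it is well defined here). Ceilings are coordinatewise. *)

(* Defs.v *)
From Stdlib Require Import Reals Lra Lia ZArith.
From Stdlib Require Vectors.Fin.
Open Scope R_scope.

Definition NVec (n : nat) := Fin.t n -> nat.
Definition RVec (n : nat) := Fin.t n -> R.

Definition unitv {n : nat} (i : Fin.t n) : NVec n :=
  fun j => if Fin.eq_dec i j then 1%nat else 0%nat.

Definition nadd {n : nat} (k m : NVec n) : NVec n := fun i => (k i + m i)%nat.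
Definition radd {n : nat} (r s : RVec n) : RVec n := fun i => r i + s i.
Definition rscale {n : nat} (a : R) (r : RVec n) : RVec n := fun i => a * r i.

Definition nonnegv {n : nat} (r : RVec n) : Prop := forall i, 0 <= r i.

Definition subadditive {n : nat} (f : NVec n -> R) : Prop :=
  forall k m, f (nadd k m) <= f k + f m.

(* ceiling of a real: ceil x = - floor (-x), truncated to nat (used on x >= 0) *)
Definition ceilN (x : R) : nat := Z.to_nat (- Int_part (- x)).

Definition fext {n : nat} (f : NVec n -> R) (r : RVec n) : R :=
  f (fun i => ceilN (r i)).

Definition lim_infty (g : R -> R) (l : R) : Prop :=
  forall eps, 0 < eps -> exists T, forall t, T <= t -> Rabs (g t - l) < eps.

Fixpoint sumFin (n : nat) : (Fin.t n -> R) -> R :=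
  match n with
  | O => fun _ => 0
  | S m => fun g => g Fin.F1 + sumFin m (fun i => g (Fin.FS i))
  end.

Fixpoint maxFin (n : nat) : (Fin.t n -> R) -> R -> R :=
  match n with
  | O => fun _ d => d
  | S m => fun g d => Rmax (g Fin.F1) (maxFin m (fun i => g (Fin.FS i)) d)
  end.

Definition vcv {n : nat} (r : nat -> RVec n) (l : RVec n) : Prop :=
  forall i, Un_cv (fun t => r t i) (l i).

(* Main.v *)
Require Import Defs.
From Stdlib Require Import Reals Lra Lia ZArith Classical FunctionalExtensionality ClassicalEpsilon.
From Stdlib Require Vectors.Fin.
Open Scope R_scope.

Lemma maxFin_ge_g n : forall g d i, g i <= maxFin n g d.
Proof.
  induction n; intros g d i; [inversion i|].
  simpl. apply (Fin.caseS' i); [apply Rmax_l|].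
  intros p. eapply Rle_trans; [apply (IHn (fun i => g (Fin.FS i)))|apply Rmax_r].
Qed.

Lemma maxFin_ge_d n : forall g d, d <= maxFin n g d.
Proof.
  induction n; intros g d; simpl; [lra|].
  eapply Rle_trans; [apply IHn|apply Rmax_r].
Qed.

Lemma sumFin_ext n : forall g h, (forall i, g i = h i) -> sumFin n g = sumFin n h.
Proof.
  induction n; intros g h H; simpl; [reflexivity|].
  rewrite H. f_equal. apply IHn. intros; apply H.
Qed.

Lemma sumFin_plus n : forall g h, sumFin n (fun i => g i + h i) = sumFin n g + sumFin n h.
Proof.
  induction n; intros g h; simpl; [lra|].
  rewrite (IHn (fun i => g (Fin.FS i)) (fun i => h (Fin.FS i))). lra.
Qed.

Lemma sumFin_scal n : forall c g, sumFin n (fun i => c * g i) = c * sumFin n g.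
Proof.
  induction n; intros c g; simpl; [lra|].
  rewrite (IHn c (fun i => g (Fin.FS i))). lra.
Qed.

Lemma sumFin_le n : forall g h, (forall i, g i <= h i) -> sumFin n g <= sumFin n h.
Proof.
  induction n; intros g h H; simpl; [lra|].
  pose proof (H Fin.F1). pose proof (IHn (fun i => g (Fin.FS i)) (fun i => h (Fin.FS i)) (fun i => H _)). lra.
Qed.

Lemma sumFin_0 n : sumFin n (fun _ => 0) = 0.
Proof. induction n; simpl; [lra|]. rewrite IHn; lra. Qed.

Lemma sumFin_nonneg n g : (forall i, 0 <= g i) -> 0 <= sumFin n g.
Proof. intros H. rewrite <- (sumFin_0 n). apply sumFin_le. auto. Qed.

Lemma sumFin_zero_each n : forall g, (forall i, 0 <= g i) -> sumFin n g = 0 -> forall i, g i = 0.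
Proof.
  induction n; intros g Hg Hs i; [inversion i|].
  simpl in Hs.
  pose proof (sumFin_nonneg n (fun i => g (Fin.FS i)) (fun i => Hg _)).
  pose proof (Hg Fin.F1).
  apply (Fin.caseS' i); [lra|].
  intros p. apply (IHn (fun i => g (Fin.FS i))); [intros; apply Hg|lra].
Qed.

Lemma sumFin_unit n : forall (i : Fin.t n), sumFin n (fun j => INR (unitv i j)) = 1.
Proof.
  induction n; intros i; [inversion i|].
  apply (Fin.caseS' i).
  - simpl. rewrite sumFin_0. unfold unitv. destruct (Fin.eq_dec Fin.F1 Fin.F1) as [_|C]; [|congruence].
    simpl; lra.
  - intros p. simpl.
    rewrite (sumFin_ext n (fun i0 => INR (unitv (Fin.FS p) (Fin.FS i0))) (fun j => INR (unitv p j))); [rewrite IHn; lra|].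
    intros j. unfold unitv. destruct (Fin.eq_dec (Fin.FS p) (Fin.FS j)) as [E|E];
      destruct (Fin.eq_dec p j) as [E'|E']; try reflexivity.
    + apply Fin.FS_inj in E. congruence.
    + subst. congruence.
Qed.

Lemma sumFin_cv0 n : forall (u : nat -> Fin.t n -> R), (forall i, Un_cv (fun t => u t i) 0) ->
  Un_cv (fun t => sumFin n (u t)) 0.
Proof.
  induction n; intros u H; simpl.
  - intros eps He. exists 0%nat. intros. unfold R_dist. rewrite Rminus_0_r, Rabs_R0. lra.
  - replace 0 with (0 + 0) by lra. apply CV_plus; [apply H|].
    apply (IHn (fun t i => u t (Fin.FS i))). intros; apply H.
Qed.

Lemma f_ext {n} (f : NVec n -> R) k m : (forall i, k i = m i) -> f k = f m.
Proof. intros H. rewrite (functional_extensionality k m H). reflexivity. Qed.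

Definition DD {n} (f : NVec n -> R) D0 := maxFin n (fun i => f (unitv i)) D0.

Lemma f_step n (f : NVec n -> R) D0 (f_sub : subadditive f)
  (f_D0 : forall k i, f k - f (nadd k (unitv i)) <= D0) :
  forall k i, Rabs (f (nadd k (unitv i)) - f k) <= DD f D0.
Proof.
  intros k i. pose proof (f_sub k (unitv i)). pose proof (f_D0 k i).
  pose proof (maxFin_ge_g n (fun i => f (unitv i)) D0 i).
  pose proof (maxFin_ge_d n (fun i => f (unitv i)) D0).
  unfold DD. apply Rabs_le. simpl in *. lra.
Qed.

Lemma f_dir n (f : NVec n -> R) D0 (f_sub : subadditive f)
  (f_D0 : forall k i, f k - f (nadd k (unitv i)) <= D0) :
  forall K a c, sumFin n (fun i => INR (a i)) = INR K ->
    Rabs (f (nadd c a) - f c) <= DD f D0 * INR K.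
Proof.
  induction K; intros a c Hs.
  - simpl in Hs. pose proof (sumFin_zero_each n (fun i => INR (a i)) (fun i => pos_INR _) Hs) as Z.
    rewrite (f_ext f (nadd c a) c).
    + simpl. rewrite Rminus_diag, Rabs_R0. lra.
    + intros i. unfold nadd. specialize (Z i). simpl in Z. change 0 with (INR 0) in Z. apply INR_eq in Z. rewrite Z. lia.
  - destruct (classic (exists i, (0 < a i)%nat)) as [[i Hi]|Hn].
    + set (a' := fun j => if Fin.eq_dec i j then (a j - 1)%nat else a j).
      assert (Ea : forall j, a j = (a' j + unitv i j)%nat).
      { intros j. unfold a', unitv. destruct (Fin.eq_dec i j); [subst; lia|lia]. }
      assert (Hs' : sumFin n (fun j => INR (a' j)) = INR K).
      { rewrite (sumFin_ext n (fun i => INR (a i)) (fun j => INR (a' j) + INR (unitv i j))) in Hs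
          by (intros j; rewrite (Ea j) at 1; rewrite plus_INR; reflexivity).
        rewrite sumFin_plus, sumFin_unit in Hs.
        rewrite S_INR in Hs. lra. }
      specialize (IHK a' c Hs').
      pose proof (f_step n f D0 f_sub f_D0 (nadd c a') i) as St.
      rewrite (f_ext f (nadd (nadd c a') (unitv i)) (nadd c a)) in St
        by (intros j; unfold nadd; rewrite Ea; lia).
      rewrite S_INR.
      replace (f (nadd c a) - f c) with ((f (nadd c a) - f (nadd c a')) + (f (nadd c a') - f c)) by ring.
      eapply Rle_trans; [apply Rabs_triang|]. lra.
    + exfalso. assert (Z : forall i, a i = 0%nat).
      { intros i. destruct (a i) eqn:E; [reflexivity|]. exfalso. apply Hn. exists i. lia. }
      rewrite (sumFin_ext n _ (fun _ => 0)) in Hs by (intros i; rewrite Z; reflexivity).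
      rewrite sumFin_0 in Hs. pose proof (pos_INR K). rewrite S_INR in Hs. lra.
Qed.

Lemma sumFin_nat n : forall (a : Fin.t n -> nat), exists K, sumFin n (fun i => INR (a i)) = INR K.
Proof.
  induction n; intros a; simpl; [exists 0%nat; reflexivity|].
  destruct (IHn (fun i => a (Fin.FS i))) as [K HK]. exists (a Fin.F1 + K)%nat.
  rewrite HK, plus_INR. reflexivity.
Qed.

Lemma f_lip n (f : NVec n -> R) D0 (f_sub : subadditive f)
  (f_D0 : forall k i, f k - f (nadd k (unitv i)) <= D0) :
  forall k m, Rabs (f k - f m) <= DD f D0 * sumFin n (fun i => Rabs (INR (k i) - INR (m i))).
Proof.
  intros k m.
  set (c := fun i => Nat.min (k i) (m i)).
  set (a := fun i => (k i - c i)%nat). set (b := fun i => (m i - c i)%nat).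
  destruct (sumFin_nat n a) as [Ka HKa]. destruct (sumFin_nat n b) as [Kb HKb].
  pose proof (f_dir n f D0 f_sub f_D0 Ka a c HKa) as Ha.
  pose proof (f_dir n f D0 f_sub f_D0 Kb b c HKb) as Hb.
  rewrite (f_ext f (nadd c a) k) in Ha by (intros i; unfold nadd, a, c; lia).
  rewrite (f_ext f (nadd c b) m) in Hb by (intros i; unfold nadd, b, c; lia).
  rewrite (sumFin_ext n _ (fun i => INR (a i) + INR (b i))).
  - rewrite sumFin_plus, HKa, HKb.
    replace (f k - f m) with ((f k - f c) - (f m - f c)) by ring.
    eapply Rle_trans; [apply Rabs_triang|]. rewrite Rabs_Ropp. lra.
  - intros i. unfold a, b, c. destruct (Nat.le_ge_cases (k i) (m i)) as [H|H].
    + rewrite Nat.min_l by exact H. rewrite Nat.sub_diag, minus_INR by exact H.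
      apply le_INR in H. rewrite Rabs_left1 by lra. simpl. ring.
    + rewrite Nat.min_r by exact H. rewrite Nat.sub_diag, minus_INR by exact H.
      apply le_INR in H. rewrite Rabs_pos_eq by lra. simpl. ring.
Qed.

Lemma DD_mono n (f : NVec n -> R) D0 (f_nonneg : forall k, 0 <= f k) :
  forall g h, (forall i, g i <= h i) -> DD f D0 * sumFin n g <= DD f D0 * sumFin n h.
Proof.
  intros g h H. destruct n.
  - simpl. lra.
  - apply Rmult_le_compat_l; [|apply sumFin_le; exact H].
    unfold DD. eapply Rle_trans; [apply (f_nonneg (unitv Fin.F1))|].
    apply (maxFin_ge_g (S n) (fun i => f (unitv i)) D0 Fin.F1).
Qed.

Lemma ceilN_bounds x : 0 <= x -> x <= INR (ceilN x) < x + 1.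
Proof.
  intros Hx. unfold ceilN, Int_part.
  destruct (archimed (- x)) as [H1 H2].
  set (z := up (- x)) in *.
  assert (E : IZR (- (z - 1)) = 1 - IZR z) by (rewrite opp_IZR, minus_IZR; simpl; ring).
  assert (Hz : (0 <= - (z - 1))%Z).
  { apply le_IZR. rewrite E. simpl. lra. }
  rewrite INR_IZR_INZ, Z2Nat.id by exact Hz. rewrite E. lra.
Qed.

Lemma lim_unique g L1 L2 : lim_infty g L1 -> lim_infty g L2 -> L1 = L2.
Proof.
  intros H1 H2. destruct (Req_dec L1 L2) as [E|N]; [exact E|exfalso].
  assert (He : 0 < Rabs (L1 - L2) / 2).
  { apply Rdiv_lt_0_compat; [apply Rabs_pos_lt; lra|lra]. }
  destruct (H1 _ He) as [T1 HT1]. destruct (H2 _ He) as [T2 HT2].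
  specialize (HT1 (Rmax T1 T2) (Rmax_l _ _)). specialize (HT2 (Rmax T1 T2) (Rmax_r _ _)).
  set (y := g (Rmax T1 T2)) in *.
  pose proof (Rabs_triang (y - L2) (L1 - y)).
  replace (y - L2 + (L1 - y)) with (L1 - L2) in H by ring.
  rewrite <- Rabs_Ropp in HT1. replace (- (y - L1)) with (L1 - y) in HT1 by ring. lra.
Qed.

Lemma lim_ext g h L : (forall t, g t = h t) -> lim_infty g L -> lim_infty h L.
Proof. intros E H eps He. destruct (H eps He) as [T HT]. exists T. intros t Ht. rewrite <- E. auto. Qed.

Lemma small_div c eps t : 0 < eps -> 0 < t -> (Rabs c + 1) / eps <= t -> Rabs (c / t) < eps.
Proof.
  intros He Ht H. unfold Rdiv in *. rewrite Rabs_mult, Rabs_inv, (Rabs_pos_eq t) by lra.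
  apply Rmult_le_compat_r with (r := eps) in H; [|lra].
  rewrite Rmult_assoc, Rinv_l, Rmult_1_r in H by lra.
  apply Rmult_lt_reg_r with t; [lra|].
  rewrite Rmult_assoc, Rinv_l, Rmult_1_r by lra. lra.
Qed.

Lemma lim_le g1 g2 L1 L2 c T0 : lim_infty g1 L1 -> lim_infty g2 L2 ->
  (forall t, T0 <= t -> g1 t <= g2 t + c / t) -> L1 <= L2.
Proof.
  intros H1 H2 H. destruct (Rle_dec L1 L2) as [|N]; [assumption|exfalso].
  set (eps := (L1 - L2) / 3). assert (He : 0 < eps) by (unfold eps; lra).
  destruct (H1 _ He) as [T1 HT1]. destruct (H2 _ He) as [T2 HT2].
  set (t := Rmax (Rmax T1 T2) (Rmax (Rmax T0 1) ((Rabs c + 1) / eps))).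
  assert (t1 : T1 <= t) by (unfold t; repeat (apply Rmax_Rle; left); lra).
  assert (t2 : T2 <= t) by (unfold t; apply Rmax_Rle; left; apply Rmax_Rle; right; lra).
  assert (t0 : T0 <= t) by (unfold t; apply Rmax_Rle; right; apply Rmax_Rle; left; apply Rmax_Rle; left; lra).
  assert (tp : 1 <= t) by (unfold t; apply Rmax_Rle; right; apply Rmax_Rle; left; apply Rmax_Rle; right; lra).
  assert (tc : (Rabs c + 1) / eps <= t) by (unfold t; apply Rmax_Rle; right; apply Rmax_Rle; right; lra).
  pose proof (small_div c eps t He ltac:(lra) tc) as Hc.
  specialize (HT1 t t1). specialize (HT2 t t2). specialize (H t t0).
  apply Rabs_def2 in HT1. apply Rabs_def2 in HT2. apply Rabs_def2 in Hc. unfold eps in *. lra.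
Qed.

Lemma lim_plus g h L M : lim_infty g L -> lim_infty h M -> lim_infty (fun t => g t + h t) (L + M).
Proof.
  intros H1 H2 eps He.
  destruct (H1 (eps/2) ltac:(lra)) as [T1 HT1]. destruct (H2 (eps/2) ltac:(lra)) as [T2 HT2].
  exists (Rmax T1 T2). intros t Ht.
  specialize (HT1 t (Rle_trans _ _ _ (Rmax_l _ _) Ht)). specialize (HT2 t (Rle_trans _ _ _ (Rmax_r _ _) Ht)).
  replace (g t + h t - (L + M)) with ((g t - L) + (h t - M)) by ring.
  eapply Rle_lt_trans; [apply Rabs_triang|]. lra.
Qed.

Lemma lim_const c : lim_infty (fun _ => c) c.
Proof. intros eps He. exists 0. intros. rewrite Rminus_diag, Rabs_R0. lra. Qed.

Lemma lim_inv : lim_infty (fun t => / t) 0.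
Proof.
  intros eps He. exists (2 / eps + 1). intros t Ht.
  assert (0 < 2 / eps) by (apply Rdiv_lt_0_compat; lra).
  rewrite Rminus_0_r. pose proof (small_div 1 eps t He ltac:(lra)).
  rewrite Rabs_R1 in H0. unfold Rdiv in H0. rewrite Rmult_1_l in H0. apply H0.
  unfold Rdiv in *. lra.
Qed.

Lemma lim_scale a g L : lim_infty g L -> lim_infty (fun t => a * g t) (a * L).
Proof.
  intros H eps He.
  destruct (H (eps / (Rabs a + 1))) as [T HT].
  { apply Rdiv_lt_0_compat; [lra|pose proof (Rabs_pos a); lra]. }
  exists T. intros t Ht. specialize (HT t Ht).
  rewrite <- Rmult_minus_distr_l, Rabs_mult.
  pose proof (Rabs_pos a). pose proof (Rabs_pos (g t - L)).
  apply Rmult_lt_compat_l with (r := Rabs a + 1) in HT; [|lra].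
  unfold Rdiv in HT. rewrite <- Rmult_assoc, (Rmult_comm _ eps), Rmult_assoc, Rinv_r, Rmult_1_r in HT by lra.
  nra.
Qed.

Lemma lim_comp_scale a g L : 0 < a -> lim_infty g L -> lim_infty (fun t => g (a * t)) L.
Proof.
  intros Ha H eps He. destruct (H eps He) as [T HT]. exists (T / a).
  intros t Ht. apply HT. apply Rmult_le_compat_l with (r := a) in Ht; [|lra].
  unfold Rdiv in Ht. rewrite (Rmult_comm T), <- Rmult_assoc, Rinv_r, Rmult_1_l in Ht by lra. lra.
Qed.

Lemma div_le_mul K eps t : 0 < eps -> K / eps <= t -> K <= eps * t.
Proof.
  intros He H. apply Rmult_le_compat_l with (r := eps) in H; [|lra].
  unfold Rdiv in H. rewrite (Rmult_comm K), <- Rmult_assoc, Rinv_r, Rmult_1_l in H by lra. exact H.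
Qed.

Lemma abs_div_bound x t L eps : 0 < t -> (L - eps) * t < x < (L + eps) * t -> Rabs (x / t - L) < eps.
Proof.
  intros Ht [H1 H2].
  replace (x / t - L) with ((x - L * t) / t) by (field; lra).
  apply Rabs_def1.
  - apply Rmult_lt_reg_r with t; [lra|]. unfold Rdiv. rewrite Rmult_assoc, Rinv_l by lra. lra.
  - apply Rmult_lt_reg_r with t; [lra|]. unfold Rdiv. rewrite Rmult_assoc, Rinv_l by lra. lra.
Qed.

Lemma euclid_R t s : 0 <= t -> 0 < s -> exists q u, 0 <= u <= s /\ t = INR q * s + u.
Proof.
  intros Ht Hs. destruct (archimed (t / s)) as [H1 H2]. set (z := up (t / s)) in *.
  assert (Hts : 0 <= t / s) by (unfold Rdiv; apply Rmult_le_pos; [lra|left; apply Rinv_0_lt_compat; lra]).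
  assert (Hz : (1 <= z)%Z) by (apply (Zlt_le_succ 0); apply lt_IZR; lra).
  exists (Z.to_nat (z - 1)), (t - IZR (z - 1) * s).
  rewrite INR_IZR_INZ, Z2Nat.id by lia. split; [|ring].
  rewrite minus_IZR. simpl.
  assert (E : t = (t / s) * s) by (field; lra).
  split; nra.
Qed.

Lemma fekete (phi : R -> R) C : 0 <= C -> (forall t, 0 <= t -> 0 <= phi t) ->
  (forall s t, 0 <= s -> 0 <= t -> phi (s + t) <= phi s + phi t + C) ->
  (forall s, 0 <= s -> exists M, forall u, 0 <= u <= s -> phi u <= M) ->
  exists L, lim_infty (fun t => phi t / t) L.
Proof.
  intros HC Hpos Hsub Hbd.
  set (psi := fun t => phi t + C).
  assert (psipos : forall s, 0 < s -> 0 <= psi s / s).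
  { intros s Hs. unfold psi, Rdiv. apply Rmult_le_pos; [pose proof (Hpos s ltac:(lra)); lra|left; apply Rinv_0_lt_compat; lra]. }
  set (E := fun x => exists s, 0 < s /\ x = - (psi s / s)).
  assert (bE : bound E).
  { exists 0. intros x [s [Hs ->]]. pose proof (psipos s Hs). lra. }
  assert (nE : exists x, E x) by (exists (- (psi 1 / 1)); exists 1; split; [lra|reflexivity]).
  destruct (completeness E bE nE) as [m [Hub Hlub]].
  set (L := - m).
  assert (Ha : forall s, 0 < s -> L <= psi s / s).
  { intros s Hs. assert (E (- (psi s / s))) by (exists s; split; [exact Hs|reflexivity]).
    specialize (Hub _ H). unfold L. lra. }
  assert (Hb : forall e, 0 < e -> exists s, 0 < s /\ psi s / s < L + e).
  { intros e He. apply NNPP. intros Hn.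
    assert (is_upper_bound E (m - e)).
    { intros x [s [Hs ->]]. destruct (Rlt_dec (psi s / s) (L + e)) as [Hl|Hl].
      - exfalso. apply Hn. exists s. split; assumption.
      - unfold L in Hl. lra. }
    specialize (Hlub _ H). lra. }
  assert (Hmul : forall s, 0 <= s -> forall q u, 0 <= u -> psi (INR q * s + u) <= INR q * psi s + psi u).
  { intros s Hs q. induction q; intros u Hu.
    - simpl. rewrite Rmult_0_l, !Rplus_0_l. lra.
    - rewrite S_INR. replace ((INR q + 1) * s + u) with (s + (INR q * s + u)) by ring.
      pose proof (pos_INR q).
      pose proof (Hsub s (INR q * s + u) Hs ltac:(nra)). specialize (IHq u Hu). unfold psi in *. lra. }
  exists L. intros eps He.
  destruct (Hb (eps / 2) ltac:(lra)) as [s [Hs Hps]].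
  destruct (Hbd s ltac:(lra)) as [M HM].
  set (a := psi s / s) in *.
  assert (Hsa : psi s = a * s) by (unfold a; field; lra).
  assert (Ha0 : 0 <= a) by (apply psipos; lra).
  exists (Rmax 1 (Rmax ((C + 1) / eps) ((2 * (Rabs (M + C) + 1)) / eps))).
  intros t Ht.
  assert (t1 : 1 <= t) by (eapply Rle_trans; [apply Rmax_l|exact Ht]).
  assert (t2 : (C + 1) / eps <= t) by (eapply Rle_trans; [|exact Ht]; eapply Rle_trans; [|apply Rmax_r]; apply Rmax_l).
  assert (t3 : (2 * (Rabs (M + C) + 1)) / eps <= t) by (eapply Rle_trans; [|exact Ht]; eapply Rle_trans; [|apply Rmax_r]; apply Rmax_r).
  apply div_le_mul in t2; [|lra]. apply div_le_mul in t3; [|lra].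
  pose proof (Rle_abs (M + C)).
  apply abs_div_bound; [lra|]. split.
  - pose proof (Ha t ltac:(lra)) as Lt. unfold psi in Lt.
    assert (L * t <= phi t + C).
    { apply Rmult_le_compat_r with (r := t) in Lt; [|lra].
      unfold Rdiv in Lt. rewrite Rmult_assoc, Rinv_l, Rmult_1_r in Lt by lra. exact Lt. }
    replace ((L - eps) * t) with (L * t - eps * t) by ring. lra.
  - destruct (euclid_R t s ltac:(lra) Hs) as [q [u [Hu Et]]].
    pose proof (Hmul s ltac:(lra) q u (proj1 Hu)) as Hq. rewrite <- Et in Hq.
    pose proof (HM u Hu). pose proof (pos_INR q).
    assert (INR q * s <= t) by lra.
    assert (INR q * psi s <= a * t) by (rewrite Hsa; nra).
    unfold psi in *. replace ((L + eps) * t) with (L * t + eps * t) by ring.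
    assert (a * t <= (L + eps / 2) * t) by (apply Rmult_le_compat_r; lra).
    replace ((L + eps / 2) * t) with (L * t + (eps * t) / 2) in H4 by field.
    lra.
Qed.

Definition ceilv {n} (X : Fin.t n -> R) : NVec n := fun i => ceilN (X i).

Lemma coord_add x y : 0 <= x -> 0 <= y ->
  Rabs (INR (ceilN (x + y)) - INR (ceilN x + ceilN y)) <= 2.
Proof.
  intros Hx Hy. rewrite plus_INR.
  pose proof (ceilN_bounds x Hx). pose proof (ceilN_bounds y Hy).
  pose proof (ceilN_bounds (x + y) ltac:(lra)). apply Rabs_le. lra.
Qed.

Lemma coord_diff x y : 0 <= x -> 0 <= y ->
  Rabs (INR (ceilN x) - INR (ceilN y)) <= Rabs (x - y) + 1.
Proof.
  intros Hx Hy. pose proof (ceilN_bounds x Hx). pose proof (ceilN_bounds y Hy).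
  apply Rabs_le. pose proof (Rle_abs (x - y)). pose proof (Rle_abs (- (x - y))).
  rewrite Rabs_Ropp in H2. lra.
Qed.


Lemma sub_gen n (f : NVec n -> R) D0 (f_nonneg : forall k, 0 <= f k) (f_sub : subadditive f)
  (f_D0 : forall k i, f k - f (nadd k (unitv i)) <= D0) :
  forall X Y Z : Fin.t n -> R, (forall i, 0 <= X i) -> (forall i, 0 <= Y i) -> (forall i, Z i = X i + Y i) ->
  f (ceilv Z) <= f (ceilv X) + f (ceilv Y) + DD f D0 * sumFin n (fun _ => 2).
Proof.
  intros X Y Z HX HY HZ.
  pose proof (f_lip n f D0 f_sub f_D0 (ceilv Z) (nadd (ceilv X) (ceilv Y))) as L.
  pose proof (f_sub (ceilv X) (ceilv Y)).
  assert (DD f D0 * sumFin n (fun i => Rabs (INR (ceilv Z i) - INR (nadd (ceilv X) (ceilv Y) i)))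
          <= DD f D0 * sumFin n (fun _ => 2)).
  { apply DD_mono; [exact f_nonneg|]. intros i. unfold ceilv, nadd. rewrite HZ. apply coord_add; auto. }
  pose proof (Rle_abs (f (ceilv Z) - f (nadd (ceilv X) (ceilv Y)))). lra.
Qed.

Lemma lip_gen n (f : NVec n -> R) D0 (f_nonneg : forall k, 0 <= f k) (f_sub : subadditive f)
  (f_D0 : forall k i, f k - f (nadd k (unitv i)) <= D0) :
  forall X Y : Fin.t n -> R, (forall i, 0 <= X i) -> (forall i, 0 <= Y i) ->
  Rabs (f (ceilv X) - f (ceilv Y)) <= DD f D0 * sumFin n (fun i => Rabs (X i - Y i) + 1).
Proof.
  intros X Y HX HY. eapply Rle_trans; [apply (f_lip n f D0 f_sub f_D0)|].
  apply DD_mono; [exact f_nonneg|]. intros i. unfold ceilv. apply coord_diff; auto.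
Qed.

Lemma ex_lim n (f : NVec n -> R) D0 (f_nonneg : forall k, 0 <= f k) (f_sub : subadditive f)
  (f_D0 : forall k i, f k - f (nadd k (unitv i)) <= D0) :
  forall r, nonnegv r -> exists L, lim_infty (fun t => fext f (rscale t r) / t) L.
Proof.
  intros r Hr.
  apply (fekete (fun t => fext f (rscale t r)) (DD f D0 * sumFin n (fun _ => 2))).
  - pose proof (DD_mono n f D0 f_nonneg (fun _ => 0) (fun _ => 2) ltac:(intros; lra)).
    rewrite sumFin_0 in H. lra.
  - intros; apply f_nonneg.
  - intros s t Hs Ht. unfold fext, rscale.
    apply (sub_gen n f D0 f_nonneg f_sub f_D0 (fun i => s * r i) (fun i => t * r i) (fun i => (s + t) * r i)).
    + intros i. pose proof (Hr i). nra.
    + intros i. pose proof (Hr i). nra.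
    + intros; ring.
  - intros s Hs. exists (f (ceilv (fun _ : Fin.t n => 0)) + DD f D0 * sumFin n (fun i => s * r i + 1)).
    intros u Hu. unfold fext, rscale.
    pose proof (lip_gen n f D0 f_nonneg f_sub f_D0 (fun i => u * r i) (fun _ => 0)) as L.
    assert (DD f D0 * sumFin n (fun i => Rabs (u * r i - 0) + 1) <= DD f D0 * sumFin n (fun i => s * r i + 1)).
    { apply DD_mono; [exact f_nonneg|]. intros i. pose proof (Hr i). rewrite Rminus_0_r, Rabs_pos_eq by nra. nra. }
    assert (Lu : Rabs (f (ceilv (fun i => u * r i)) - f (ceilv (fun _ : Fin.t n => 0)))
       <= DD f D0 * sumFin n (fun i => Rabs (u * r i - 0) + 1)).
    { apply L; intros i; [pose proof (Hr i); nra|lra]. }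
    pose proof (Rle_abs (f (ceilv (fun i => u * r i)) - f (ceilv (fun _ : Fin.t n => 0)))).
    unfold ceilv in *. lra.
Qed.

Lemma div_le a b t : 0 < t -> a <= b -> a / t <= b / t.
Proof. intros. unfold Rdiv. apply Rmult_le_compat_r; [left; apply Rinv_0_lt_compat|]; lra. Qed.

Lemma ceilN_0 : ceilN 0 = 0%nat.
Proof.
  pose proof (ceilN_bounds 0 ltac:(lra)) as [_ H].
  destruct (ceilN 0); [reflexivity|]. rewrite S_INR in H. pose proof (pos_INR n). lra.
Qed.

Lemma nat_above x : exists N, x <= INR N.
Proof.
  destruct (archimed x) as [H1 _]. exists (Z.to_nat (up x)).
  destruct (Z.le_gt_cases 0 (up x)) as [H|H].
  - rewrite INR_IZR_INZ, Z2Nat.id by exact H. lra.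
  - apply Z.lt_gt in H. apply Z.gt_lt in H. apply IZR_lt in H. pose proof (pos_INR (Z.to_nat (up x))). lra.
Qed.

Theorem mainTheorem11 (n : nat) (f : NVec n -> R) (D0 : R)
  (f_nonneg : forall k, 0 <= f k)
  (f_sub : subadditive f)
  (f_D0 : forall k i, f k - f (nadd k (unitv i)) <= D0) :
  exists fhat : RVec n -> R,
    (* fhat r = lim_{t -> oo} f(t r)/t on R_0^n *)
    (forall r, nonnegv r -> lim_infty (fun t => fext f (rscale t r) / t) (fhat r)) /\
    (* subadditive on R_0^n *)
    (forall r s, nonnegv r -> nonnegv s -> fhat (radd r s) <= fhat r + fhat s) /\
    (* convex on R_0^n *)
    (forall r s a, nonnegv r -> nonnegv s -> 0 <= a <= 1 ->
        fhat (radd (rscale a r) (rscale (1 - a) s)) <= a * fhat r + (1 - a) * fhat s) /\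
    (* Lipschitz with D = max {f(e_1),...,f(e_n), D0} *)
    (forall r s, nonnegv r -> nonnegv s ->
        Rabs (fhat r - fhat s)
          <= maxFin n (fun i => f (unitv i)) D0 * sumFin n (fun i => Rabs (r i - s i))) /\
    (* uniform convergence along sequences *)
    (forall (rt : nat -> RVec n) (lam : RVec n),
        (forall t, nonnegv (rt t)) -> vcv rt lam ->
        Un_cv (fun t => fext f (rscale (INR t) (rt t)) / INR t) (fhat lam)).
Proof.
  set (posv := fun (r : RVec n) => (fun i => Rmax 0 (r i)) : RVec n).
  assert (posn : forall r, nonnegv (posv r)) by (intros r i; apply Rmax_l).
  set (fhat := fun r => proj1_sig (constructive_indefinite_description _
                 (ex_lim n f D0 f_nonneg f_sub f_D0 (posv r) (posn r)))).
  assert (spec : forall r, nonnegv r -> lim_infty (fun t => fext f (rscale t r) / t) (fhat r)).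
  { intros r Hr. unfold fhat. destruct (constructive_indefinite_description _ _) as [L HL]. simpl.
    eapply lim_ext; [|exact HL]. intros t. unfold fext, rscale. f_equal. apply f_ext.
    intros i. unfold posv. rewrite Rmax_right by apply Hr. reflexivity. }
  set (DDf := DD f D0).
  set (C := DDf * sumFin n (fun _ => 2)).
  assert (HC : 0 <= C).
  { pose proof (DD_mono n f D0 f_nonneg (fun _ => 0) (fun _ => 2) ltac:(intros; lra)).
    rewrite sumFin_0 in H. unfold C, DDf. lra. }
  assert (Hsub : forall r s, nonnegv r -> nonnegv s -> fhat (radd r s) <= fhat r + fhat s).
  { intros r s Hr Hs.
    assert (Hrs : nonnegv (radd r s)) by (intros i; unfold radd; pose proof (Hr i); pose proof (Hs i); lra).
    apply (lim_le _ _ _ _ C 1 (spec _ Hrs) (lim_plus _ _ _ _ (spec _ Hr) (spec _ Hs))).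
    intros t Ht.
    assert (fext f (rscale t (radd r s)) <= fext f (rscale t r) + fext f (rscale t s) + C).
    { unfold fext, rscale, radd, C, DDf.
      apply (sub_gen n f D0 f_nonneg f_sub f_D0 (fun i => t * r i) (fun i => t * s i) (fun i => t * (r i + s i))).
      + intros i. pose proof (Hr i). nra.
      + intros i. pose proof (Hs i). nra.
      + intros; ring. }
    apply (div_le _ _ t) in H; [|lra].
    replace ((fext f (rscale t r) + fext f (rscale t s) + C) / t) with
      (fext f (rscale t r) / t + fext f (rscale t s) / t + C / t) in H by (field; lra).
    exact H. }
  assert (Hhom : forall r a, nonnegv r -> 0 <= a -> fhat (rscale a r) = a * fhat r).
  { intros r a Hr Ha.
    assert (Har : nonnegv (rscale a r)) by (intros i; unfold rscale; pose proof (Hr i); nra).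
    apply (lim_unique (fun t => fext f (rscale t (rscale a r)) / t)); [exact (spec _ Har)|].
    destruct Ha as [Ha|Ha].
    - eapply lim_ext; [|exact (lim_scale a _ _ (lim_comp_scale a _ _ Ha (spec r Hr)))].
      intros t. simpl.
      assert (E : fext f (rscale (a * t) r) = fext f (rscale t (rscale a r))).
      { unfold fext, rscale. apply f_ext. intros i. f_equal. ring. }
      rewrite E. destruct (Req_dec t 0) as [->|Ht].
      + unfold Rdiv. rewrite Rmult_0_r, Rinv_0. ring.
      + field. split; lra.
    - subst a. rewrite Rmult_0_l.
      pose proof (lim_scale (f (fun _ => 0%nat)) _ _ lim_inv) as LL. rewrite Rmult_0_r in LL.
      eapply lim_ext; [|exact LL].
      intros t. simpl. unfold Rdiv. f_equal.
      unfold fext, rscale. apply f_ext. intros i. rewrite <- ceilN_0. f_equal. ring. }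
  exists fhat. split; [exact spec|]. split; [exact Hsub|]. split.
  {
    intros r s a Hr Hs Ha.
    rewrite <- (Hhom r a Hr ltac:(lra)), <- (Hhom s (1 - a) Hs ltac:(lra)).
    apply Hsub; intros i; unfold rscale; [pose proof (Hr i)|pose proof (Hs i)]; nra. }
  split.
  {
    intros r s Hr Hs. change (maxFin n (fun i => f (unitv i)) D0) with DDf.
    set (K := DDf * sumFin n (fun i => Rabs (r i - s i))).
    set (Cn := DDf * sumFin n (fun _ => 1)).
    assert (Hk : forall t, 1 <= t -> Rabs (fext f (rscale t r) - fext f (rscale t s)) <= t * K + Cn).
    { intros t Ht. unfold fext, rscale.
      pose proof (lip_gen n f D0 f_nonneg f_sub f_D0 (fun i => t * r i) (fun i => t * s i)) as L.
      rewrite (sumFin_ext n _ (fun i => t * Rabs (r i - s i) + 1)) in L.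
      - rewrite sumFin_plus, sumFin_scal in L. unfold K, Cn, DDf.
        replace (t * (DD f D0 * sumFin n (fun i => Rabs (r i - s i))) + DD f D0 * sumFin n (fun _ => 1))
          with (DD f D0 * (t * sumFin n (fun i => Rabs (r i - s i)) + sumFin n (fun _ => 1))) by ring.
        apply L; intros i; [pose proof (Hr i)|pose proof (Hs i)]; nra.
      - intros i. rewrite <- Rmult_minus_distr_l, Rabs_mult, (Rabs_pos_eq t) by lra. reflexivity. }
    assert (A1 : fhat r <= fhat s + K).
    { apply (lim_le _ _ _ _ Cn 1 (spec r Hr) (lim_plus _ _ _ _ (spec s Hs) (lim_const K))).
      intros t Ht. specialize (Hk t Ht). pose proof (Rle_abs (fext f (rscale t r) - fext f (rscale t s))).
      assert (H1 : fext f (rscale t r) <= fext f (rscale t s) + t * K + Cn) by lra.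
      apply (div_le _ _ t) in H1; [|lra].
      replace ((fext f (rscale t s) + t * K + Cn) / t) with (fext f (rscale t s) / t + K + Cn / t) in H1 by (field; lra).
      exact H1. }
    assert (A2 : fhat s <= fhat r + K).
    { apply (lim_le _ _ _ _ Cn 1 (spec s Hs) (lim_plus _ _ _ _ (spec r Hr) (lim_const K))).
      intros t Ht. specialize (Hk t Ht). pose proof (Rle_abs (- (fext f (rscale t r) - fext f (rscale t s)))) as H.
      rewrite Rabs_Ropp in H.
      assert (H1 : fext f (rscale t s) <= fext f (rscale t r) + t * K + Cn) by lra.
      apply (div_le _ _ t) in H1; [|lra].
      replace ((fext f (rscale t r) + t * K + Cn) / t) with (fext f (rscale t r) / t + K + Cn / t) in H1 by (field; lra).
      exact H1. }
    apply Rabs_le. lra. }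
  intros rt lam Hrt Hcv.
  assert (Hlam : nonnegv lam).
  { intros i. apply Rnot_lt_le. intros Hl. destruct (Hcv i (- lam i) ltac:(lra)) as [N HN].
    specialize (HN N (le_n _)). unfold R_dist in HN. pose proof (Hrt N i).
    pose proof (Rle_abs (rt N i - lam i)). lra. }
  set (S := fun t => DDf * sumFin n (fun i => Rabs (rt t i - lam i))).
  assert (HS : Un_cv S 0).
  { replace 0 with (DDf * 0) by ring. unfold S. apply CV_mult.
    - intros e He. exists 0%nat. intros. unfold R_dist. rewrite Rminus_diag, Rabs_R0. lra.
    - apply (sumFin_cv0 n (fun t i => Rabs (rt t i - lam i))). intros i e He.
      destruct (Hcv i e He) as [N HN]. exists N. intros t Ht. specialize (HN t Ht).
      unfold R_dist in *. rewrite Rminus_0_r, Rabs_Rabsolu. exact HN. }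
  set (Cn := DDf * sumFin n (fun _ => 1)).
  assert (Hk : forall t : nat, (1 <= t)%nat ->
     Rabs (fext f (rscale (INR t) (rt t)) / INR t - fext f (rscale (INR t) lam) / INR t) <= S t + Cn / INR t).
  { intros t Ht. apply le_INR in Ht. simpl in Ht. set (x := INR t) in *.
    change (fext f (rscale x (rt t))) with (f (ceilv (fun i => x * rt t i))).
    change (fext f (rscale x lam)) with (f (ceilv (fun i => x * lam i))).
    pose proof (lip_gen n f D0 f_nonneg f_sub f_D0 (fun i => x * rt t i) (fun i => x * lam i)) as L.
    rewrite (sumFin_ext n _ (fun i => x * Rabs (rt t i - lam i) + 1)) in L.
    - rewrite sumFin_plus, sumFin_scal in L.
      replace (f (ceilv (fun i => x * rt t i)) / x - f (ceilv (fun i => x * lam i)) / x)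
        with ((f (ceilv (fun i => x * rt t i)) - f (ceilv (fun i => x * lam i))) / x) by (field; lra).
      unfold Rdiv. rewrite Rabs_mult, (Rabs_pos_eq (/ x)) by (left; apply Rinv_0_lt_compat; lra).
      assert (L' : Rabs (f (ceilv (fun i => x * rt t i)) - f (ceilv (fun i => x * lam i)))
                 <= x * S t + Cn).
      { unfold S, Cn, DDf.
        replace (x * (DD f D0 * sumFin n (fun i => Rabs (rt t i - lam i))) + DD f D0 * sumFin n (fun _ => 1))
          with (DD f D0 * (x * sumFin n (fun i => Rabs (rt t i - lam i)) + sumFin n (fun _ => 1))) by ring.
        apply L; intros i; [pose proof (Hrt t i)|pose proof (Hlam i)]; nra. }
      apply Rmult_le_compat_r with (r := / x) in L'; [|left; apply Rinv_0_lt_compat; lra].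
      replace ((x * S t + Cn) * / x) with (S t + Cn * / x) in L' by (field; lra). exact L'.
    - intros i. rewrite <- Rmult_minus_distr_l, Rabs_mult, (Rabs_pos_eq x) by lra. reflexivity. }
  intros eps He.
  destruct (HS (eps / 3) ltac:(lra)) as [N1 HN1].
  destruct (spec lam Hlam (eps / 3) ltac:(lra)) as [T HT].
  destruct (nat_above (Rmax 1 (Rmax T ((Rabs Cn + 1) / (eps / 3))))) as [N HN].
  exists (Nat.max N1 N). intros t Ht.
  assert (HtN : INR N <= INR t) by (apply le_INR; lia).
  assert (t1 : 1 <= INR t) by (pose proof (Rmax_l 1 (Rmax T ((Rabs Cn + 1) / (eps / 3)))); lra).
  pose proof (Rmax_r 1 (Rmax T ((Rabs Cn + 1) / (eps / 3)))).
  pose proof (Rmax_l T ((Rabs Cn + 1) / (eps / 3))).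
  pose proof (Rmax_r T ((Rabs Cn + 1) / (eps / 3))).
  assert (t2 : T <= INR t) by lra.
  assert (t3 : (Rabs Cn + 1) / (eps / 3) <= INR t) by lra.
  pose proof (small_div Cn (eps / 3) (INR t) ltac:(lra) ltac:(lra) t3) as Hc.
  assert (tge1 : (1 <= t)%nat) by (apply INR_le; simpl; lra).
  specialize (Hk t tge1). specialize (HT (INR t) t2). specialize (HN1 t ltac:(lia)).
  unfold R_dist in *. rewrite Rminus_0_r in HN1.
  pose proof (Rle_abs (S t)). pose proof (Rle_abs (Cn / INR t)).
  set (a := fext f (rscale (INR t) (rt t)) / INR t) in *.
  set (b := fext f (rscale (INR t) lam) / INR t) in *.
  replace (a - fhat lam) with ((a - b) + (b - fhat lam)) by ring.
  eapply Rle_lt_trans; [apply Rabs_triang|]. lra.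
Qed.
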